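(* Let $\pi\in[0,1]$, $\epsilon\in\left[0,\tfrac12\right]$, $g>0$ and $c\ge 0$ with $c<(1-\pi)(1-\epsilon)-\pi\epsilon g$. Let $\tilde h\in(0,1)$. Define, for $h\in[0,1]$, the expected aggregate production $$F(h)=\begin{cases}(1-h)+h\left[(1+\pi g)(1-\epsilon)+\pi\epsilon\right] & h<\tilde h \quad(\text{agents exert effort}),\\ (1-h)+h\pi(1+g) & h>\tilde h\quad(\text{agents shirk}),\end{cases}$$ and the expected welfare $$W(h)=\begin{cases}(1-h)+h\left[(1+\pi g)(1-\epsilon)+\pi\epsilon-c\right] & h<\tilde h,\\ (1-h)+h\pi(1+g) & h>\tilde h.\end{cases}$$ Then expected production and welfare drop as $h$ surpasses $\tilde h$: $\lim_{h\uparrow\tilde h}F(h)>\lim_{h\downarrow\tilde h}F(h)$ and $\lim_{h\uparrow\tilde h}W(h)>\lim_{h\downarrow\tilde h}W(h)$.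
   Context: Model: a unit mass of agents; agents $i\le h$ have access to a new technology that is good with probability $\pi$ (production $1+g$ if used and good, $0$ if used and bad, $1$ if not used). Agents who exert effort pay $c$ and obtain a signal that is wrong with probability $\epsilon$, which they follow; agents who shirk use the technology. $\tilde h$ is the threshold of the principal's firing policy: below it she credibly threatens punishment and agents exert effort, above it she does not and agents shirk. Welfare is output less agents' effort costs. *)

(* Defs.v *)
From mathcomp Require Import all_boot all_order all_algebra.
From mathcomp Require Import all_classical all_reals all_analysis.
Set Implicit Arguments. Unset Strict Implicit. Unset Printing Implicit Defensive.
Import Order.TTheory GRing.Theory Num.Theory.
Local Open Scope ring_scope.

(* The value at h = ht itself is irrelevant for the one-sided
   limits (the paper leaves it unspecified); we use the shirk branch. *)
Definition production {R : realType} (pi eps g ht : R) (h : R) : R :=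
  if h < ht then (1 - h) + h * ((1 + pi * g) * (1 - eps) + pi * eps)
  else (1 - h) + h * (pi * (1 + g)).

Definition welfare {R : realType} (pi eps g c ht : R) (h : R) : R :=
  if h < ht then (1 - h) + h * ((1 + pi * g) * (1 - eps) + pi * eps - c)
  else (1 - h) + h * (pi * (1 + g)).

(* Main.v *)
Require Import Defs.
From mathcomp Require Import all_boot all_order all_algebra.
From mathcomp Require Import all_classical all_reals all_analysis.
From mathcomp Require Import ring lra.
Import Order.TTheory GRing.Theory Num.Theory numFieldNormedType.Exports.
Local Open Scope ring_scope.
Local Open Scope classical_set_scope.

Lemma lin_cvg (R : realType) (ht a : R) :
  (1 - h) + h * a @[h --> ht] --> (1 - ht) + ht * a.
Proof.
apply: cvgD; first (apply: cvgB; [exact: cvg_cst| exact: cvg_id]).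
apply: cvgM; [exact: cvg_id| exact: cvg_cst].
Qed.

Lemma pw_left (R : realType) (ht a b : R) :
  (if h < ht then (1 - h) + h * a else (1 - h) + h * b) @[h --> ht^'-]
    --> (1 - ht) + ht * a.
Proof.
apply: (cvg_trans _ (cvg_at_left_filter (lin_cvg _ ht a))).
apply: near_eq_cvg; near=> h.
have -> : h < ht by near: h; exact: nbhs_left_lt.
by [].
Unshelve. all: by end_near.
Qed.

Lemma pw_right (R : realType) (ht a b : R) :
  (if h < ht then (1 - h) + h * a else (1 - h) + h * b) @[h --> ht^'+]
    --> (1 - ht) + ht * b.
Proof.
apply: (cvg_trans _ (cvg_at_right_filter (lin_cvg _ ht b))).
apply: near_eq_cvg; near=> h.
have hh : ht < h by near: h; exact: nbhs_right_gt.
by rewrite ltNge (ltW hh).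
Unshelve. all: by end_near.
Qed.

Theorem corollary1 (R : realType) (pi eps g c ht : R)
  (Hpi0 : 0 <= pi) (Hpi1 : pi <= 1)
  (Heps0 : 0 <= eps) (Heps1 : eps <= 1 / 2)
  (Hg : 0 < g) (Hc0 : 0 <= c)
  (Hc : c < (1 - pi) * (1 - eps) - pi * eps * g)
  (Hht0 : 0 < ht) (Hht1 : ht < 1) :
  (exists lL lR : R,
      production pi eps g ht h @[h --> ht^'-] --> lL /\
      production pi eps g ht h @[h --> ht^'+] --> lR /\ lR < lL) /\
  (exists lL lR : R,
      welfare pi eps g c ht h @[h --> ht^'-] --> lL /\
      welfare pi eps g c ht h @[h --> ht^'+] --> lR /\ lR < lL).
Proof.
rewrite /production /welfare.
split; (eexists; eexists; split; [exact: pw_left|split; [exact: pw_right|]]);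
  rewrite ltrD2l ltr_pM2l // -subr_gt0.
- have -> : (1 + pi * g) * (1 - eps) + pi * eps - pi * (1 + g)
          = (1 - pi) * (1 - eps) - pi * eps * g by ring.
  exact: le_lt_trans Hc0 Hc.
- have -> : (1 + pi * g) * (1 - eps) + pi * eps - c - pi * (1 + g)
          = ((1 - pi) * (1 - eps) - pi * eps * g) - c by ring.
  by rewrite subr_gt0.
Qed.
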